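(* Let $\mathbf{G}=(\mathcal{V},\mathcal{E})$ be a directed graph on $\mathcal{V}=\{1,\dots,m\}$, let $a>0$, let $x=(x_1,\dots,x_m)\in[0,a)^m$ be fixed, and let $\{r_{ij}\}_{(i,j)\in\mathcal{E}}$ be independent random variables, each uniform on $[0,ma)$. Define $t_i=\mathrm{mod}\big(\sum_{j:(j,i)\in\mathcal{E}} r_{ji}-\sum_{j:(i,j)\in\mathcal{E}} r_{ij},\,ma\big)$ and $\tilde{x}_i=\mathrm{mod}(x_i+t_i,ma)$. If the undirected graph $\bar{\mathbf{G}}$ is connected, then the perturbed inputs $(\tilde{x}_1,\dots,\tilde{x}_m)$ are uniformly distributed over $[0,ma)^m$ subject to the constraint $\mathrm{mod}\big(\sum_{i=1}^m\tilde{x}_i,ma\big)=\sum_{i=1}^m x_i$.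
   Context: $\bar{\mathbf{G}}$ is the undirected graph on $\mathcal{V}$ obtained from $\mathbf{G}$ by ignoring edge orientations. For $a'>0$ and real $y$, $\mathrm{mod}(y,a')=y-pa'$ where $p$ is the unique integer with $y-pa'\in[0,a')$. *)

(* Defs.v *)
From HB Require Import structures.
From mathcomp Require Import all_boot all_order all_algebra.
From mathcomp Require Import all_classical all_reals all_analysis.
Set Implicit Arguments. Unset Strict Implicit. Unset Printing Implicit Defensive.
Import Order.TTheory GRing.Theory Num.Theory.
Local Open Scope classical_set_scope.
Local Open Scope ring_scope.

Definition modr (R : realType) (a' y : R) : R :=
  y - (Num.floor (y / a'))%:~R * a'.

Definition undirected (m : nat) (E : rel 'I_m) : rel 'I_m :=
  fun u v => E u v || E v u.

Definition ugraph_connected (m : nat) (E : rel 'I_m) : Prop :=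
  forall u v : 'I_m, connect (undirected E) u v.

Definition tmask (R : realType) (m : nat) (E : rel 'I_m) (a : R)
    (r : 'I_m -> 'I_m -> R) (i : 'I_m) : R :=
  modr (m%:R * a) ((\sum_(j | E j i) r j i) - (\sum_(j | E i j) r i j)).

Definition xpert (R : realType) (m : nat) (E : rel 'I_m) (a : R)
    (x : 'I_m -> R) (r : 'I_m -> 'I_m -> R) (i : 'I_m) : R :=
  modr (m%:R * a) (x i + tmask E a r i).

(* Main.v *)
Require Import Defs.
From HB Require Import structures.
From mathcomp Require Import all_boot all_order all_algebra.
From mathcomp Require Import all_classical all_reals all_analysis.
From mathcomp Require Import measurable_realfun lebesgue_measure lebesgue_integral probability.
From mathcomp Require Import lra.
Import Order.TTheory GRing.Theory Num.Theory.
Local Open Scope classical_set_scope.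
Local Open Scope ring_scope.
Set Implicit Arguments. Unset Strict Implicit. Unset Printing Implicit Defensive.

Section modr_lemmas.
Context (R : realType) (c : R) (hc : 0 < c).

Lemma modr_itv y : 0 <= modr c y < c.
Proof.
rewrite /modr; have /andP[h1 h2] := floor_itv (y / c).
rewrite intrD in h2.
have yq : y = (y / c) * c by rewrite divfK // gt_eqF.
move: h1 h2; set q := y / c; set f := (Num.floor q)%:~R => h1 h2.
have e1 : 0 <= (q - f) * c by rewrite mulr_ge0 // ?subr_ge0 // ltW.
have e2 : (q - f - 1) * c < 0 by rewrite pmulr_llt0 // ; lra.
rewrite !mulrBl mul1r in e1 e2; rewrite yq; apply/andP; split.
all: rewrite -/q; lra.
Qed.

Lemma modr_small y : 0 <= y < c -> modr c y = y.
Proof.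
move=> /andP[h1 h2]; rewrite /modr (_ : Num.floor (y / c) = 0) ?mul0r ?subr0 //.
apply: floor_def; rewrite add0r /= mulr0z; apply/andP; split.
  by rewrite divr_ge0 // ltW.
by rewrite ltr_pdivrMr // mul1r.
Qed.

Lemma modrDz y (n : int) : modr c (y + n%:~R * c) = modr c y.
Proof.
rewrite /modr mulrDl mulfK ?gt_eqF // floorDrz ?intr_int //.
by rewrite intrKfloor intrD mulrDl; lra.
Qed.

Lemma modr_mod x y : modr c (x + modr c y) = modr c (x + y).
Proof.
have -> : x + modr c y = (x + y) + (- Num.floor (y / c))%:~R * c.
  by rewrite /modr intrN mulNr addrA.
by rewrite modrDz.
Qed.

Lemma modr_sub x : modr c (x - c) = modr c x.
Proof.
have -> : x - c = x + (-1)%:~R * c by rewrite mulrN1z mulN1r.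
by rewrite modrDz.
Qed.

Lemma measurable_modr : measurable_fun [set: R] (modr c).
Proof.
rewrite /modr; apply: measurable_funB => //.
apply: nondecreasing_measurable => // u v uv.
rewrite ler_pM2r // ler_int; apply: le_floor.
by rewrite ler_pM2r // invr_gt0.
Qed.

End modr_lemmas.

Lemma mpre d d' (T1 : measurableType d) (T2 : measurableType d') (f : T1 -> T2) (A : set T2) :
  measurable_fun setT f -> measurable A -> measurable (f @^-1` A).
Proof. by move=> mf mA; rewrite -(setTI (f @^-1` A)); apply: mf. Qed.

Section TI.
Context (R : realType).
Local Notation lam := (@lebesgue_measure R).

Lemma lebesgue_shift (t : R) (A : set R) : measurable A ->
  lam ((fun u => t + u) @^-1` A) = lam A.
Proof.
move=> mA.
have -> : lam ((fun u => t + u) @^-1` A) =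
  pushforward lebesgue_measure ((fun u => t + u) : _ -> measurableTypeR R) A by [].
apply/esym/lebesgue_measure_unique => //=.
  by apply: measurable_funD.
move=> _ _ [[a b]] _ <-; rewrite /pushforward.
have -> : (+%R t) @^-1` `]a, b]%classic = `](a - t), (b - t)]%classic.
  by apply/seteqP; split => x /=; rewrite !in_itv /= => /andP[h1 h2]; apply/andP; split; lra.
rewrite !lebesgue_measure_itv /= !lte_fin ltrD2r.
by case: ifP => // _; rewrite -!EFinD; congr (_%:E); lra.
Qed.

Lemma lebesgue_refl (t : R) (A : set R) : measurable A ->
  lam ((fun u => t - u) @^-1` A) = lam A.
Proof.
move=> mA.
have mA' : measurable ((fun u => t + u) @^-1` A).
  by apply: mpre => //; apply: measurable_funD.
rewrite -(lebesgue_shift t mA) -(lebesgue_measureN mA') /pushforward.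
by [].
Qed.

Context (c : R) (hc : 0 < c).

Lemma UL (X : set R) : measurable X ->
  uniform_prob hc X = ((c^-1)%:E * lam (X `&` `[0%R, c]%classic))%E.
Proof.
move=> mX; rewrite /uniform_prob integral_uniform_pdf.
rewrite (eq_integral (fun=> (c - 0)^-1%:E)); last first.
  by move=> x; rewrite inE /= in_itv /= /uniform_pdf => -[_ ->].
by rewrite integral_cst ?subr0 //; apply: measurableI.
Qed.

Lemma endpt (Y : set R) : measurable Y -> lam (Y `&` `[0, c]) = lam (Y `&` `[0, c[).
Proof.
move=> mY.
have -> : Y `&` `[0, c] = (Y `&` `[0, c[) `|` (Y `&` [set c]).
  apply/seteqP; split => x /=; rewrite !in_itv /=.
    move=> [Yx /andP[h1 h2]]; have [xc|xc] := eqVneq x c; first by right.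
    by left; split => //; rewrite h1 /= lt_neqAle xc.
  move=> [[Yx /andP[h1 h2]]|[Yx xc]]; (split; [by []| apply/andP; split]) => //.
  - exact: ltW.
  - by rewrite xc ltW.
  - by rewrite xc.
apply: (@measureU0 _ _ _ lam); first by apply: measurableI.
  by apply: measurableI.
apply: (@subset_measure0 _ (measurableTypeR R) _ lam (Y `&` [set c]) [set c]).
- by apply: measurableI.
- exact: measurable_set1.
- by move=> x [].
- exact: lebesgue_measure_set1.
Qed.

Lemma measurable_modr_aff (v e : R) : measurable_fun setT (fun u => modr c (v + e * u)).
Proof.
apply: measurableT_comp; first exact: measurable_modr.
apply: measurable_funD => //; apply: measurable_funM => //.
Qed.

Lemma lamU (X Y : set R) : measurable X -> measurable Y -> X `&` Y = set0 ->
  lam (X `|` Y) = (lam X + lam Y)%E.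
Proof. exact: (measureU lam). Qed.

Lemma TI_pos (v : R) (A : set R) : measurable A ->
  lam (((fun u => modr c (v + u)) @^-1` A) `&` `[0, c[) = lam (A `&` `[0, c[).
Proof.
move=> mA.
set s := modr c v.
have /andP[s0 sc] : 0 <= s < c by apply: modr_itv.
have ms : forall u, modr c (v + u) = modr c (u + s).
  by move=> u; rewrite /s modr_mod // addrC.
have mI : forall a b : R, measurable (A `&` `[a, b[) by move=> a b; apply: measurableI.
have -> : ((fun u => modr c (v + u)) @^-1` A) `&` `[0, c[ =
   ((fun u => s + u) @^-1` (A `&` `[s, c[)) `|` ((fun u => (s - c) + u) @^-1` (A `&` `[0, s[)).
  apply/seteqP; split => x /=; rewrite !in_itv /= ms.
    move=> [Ax /andP[h1 h2]].
    have [xs|xs] := ltP x (c - s).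
      left; rewrite (modr_small hc) in Ax; last by apply/andP; split; lra.
      by split; [rewrite addrC|apply/andP; split; lra].
    right; rewrite -(modr_sub hc) (modr_small hc) in Ax; last by apply/andP; split; lra.
    by split; [rewrite (_ : s - c + x = x + s - c) //; lra|apply/andP; split; lra].
  move=> [[Ax /andP[h1 h2]]|[Ax /andP[h1 h2]]].
    rewrite (modr_small hc); last by apply/andP; split; lra.
    by split; [rewrite addrC|apply/andP; split; lra].
  rewrite -(modr_sub hc) (modr_small hc); last by apply/andP; split; lra.
  by split; [rewrite (_ : x + s - c = s - c + x) //; lra|apply/andP; split; lra].
rewrite lamU; first last.
- apply/seteqP; split => x //=; rewrite !in_itv /= => -[[_ /andP[h1 h2]] [_ /andP[h3 h4]]]; lra.
- by apply: mpre => //; apply: measurable_funD.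
- by apply: mpre => //; apply: measurable_funD.
rewrite !lebesgue_shift //.
have -> : A `&` `[0, c[ = (A `&` `[s, c[) `|` (A `&` `[0, s[).
  apply/seteqP; split => x /=; rewrite !in_itv /=.
    move=> [Ax /andP[h1 h2]]; have [xs|xs] := ltP x s.
      by right; split => //; apply/andP; split.
    by left; split => //; apply/andP; split.
  by move=> [[Ax /andP[h1 h2]]|[Ax /andP[h1 h2]]]; split => //; apply/andP; split; lra.
rewrite lamU //.
apply/seteqP; split => x //=; rewrite !in_itv /= => -[[_ /andP[h1 h2]] [_ /andP[h3 h4]]]; lra.
Qed.

Lemma TI (v e : R) (A : set R) : e = 1 \/ e = -1 -> measurable A ->
  uniform_prob hc ((fun u => modr c (v + e * u)) @^-1` A) = uniform_prob hc A.
Proof.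
move=> he mA.
rewrite !UL //; last by apply: mpre => //; apply: measurable_modr_aff.
congr (_ * _)%E; rewrite endpt //; last by apply: mpre => //; apply: measurable_modr_aff.
rewrite endpt //.
case: he => ->.
  under eq_fun do rewrite mul1r.
  by rewrite TI_pos.
have mX : measurable ((fun u => modr c (v + u)) @^-1` A).
  by apply: mpre => //; rewrite (_ : (fun u => modr c (v + u)) = (fun u => modr c (v + 1 * u))); [apply: measurable_modr_aff| apply/funext => u; rewrite mul1r].
have mX' : measurable ((fun u => modr c (v + -1 * u)) @^-1` A).
  by apply: mpre => //; apply: measurable_modr_aff.
rewrite -endpt // -(TI_pos v mA) -endpt //.
rewrite -[RHS](lebesgue_refl c); last by apply: measurableI.
congr lam; apply/seteqP; split => x /=; rewrite !in_itv /=.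
  move=> [Ax /andP[h1 h2]]; split; last by apply/andP; split; lra.
  by rewrite addrA -(modr_sub hc) (_ : v + c - x - c = v + -1 * x) //; lra.
move=> [Ax /andP[h1 h2]]; split; last by apply/andP; split; lra.
by rewrite (_ : v + -1 * x = v + (c - x) - c) ?modr_sub //; lra.
Qed.

End TI.

Section StepI.
Context d (T : measurableType d) (R : realType) (P : probability T R) (c : R) (hc : 0 < c).
Local Notation Unif := (uniform_prob hc).

Lemma stepI (Gen : set (set T)) (U : T -> R) :
  Gen `<=` measurable -> setI_closed Gen -> Gen setT -> measurable_fun setT U ->
  (forall A X, measurable A -> Gen X -> P (U @^-1` A `&` X) = (Unif A * P X)%E) ->
  forall A X, measurable A -> <<s Gen >> X -> P (U @^-1` A `&` X) = (Unif A * P X)%E.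
Proof.
move=> Gm GI GT mU h A X mA sX.
have mUA : measurable (U @^-1` A) := mpre mU mA.
have r0 : (0 <= fine (Unif A))%R by apply: fine_ge0; apply: measure_ge0.
have UAE : Unif A = (fine (Unif A))%:E by rewrite fineK // fin_num_measure.
pose m1 := mrestr P mUA. pose m2 := mscale (NngNum r0) P.
have := @g_sigma_algebra_measure_unique _ _ _ Gen Gm (fun=> setT) (fun=> GT) _ m1 m2 GI _ _ X sX.
move=> H.
have E1 : P (U @^-1` A `&` X) = mrestr P mUA X by rewrite /mrestr setIC.
have E2 : (Unif A * P X)%E = mscale (NngNum r0) P X by rewrite /mscale {1}UAE.
rewrite E1 E2; apply: H.
- by apply/seteqP; split => x // _; exists 0%N.
- move=> Y GY; transitivity (P (U @^-1` A `&` Y)); first by rewrite setIC.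
  by rewrite h // {1}UAE.
- move=> _; rewrite /mrestr /= (le_lt_trans (probability_le1 _ _)) ?ltry //.
  by apply: measurableI.
Qed.

End StepI.

Section L1.
Context d (T : measurableType d) (R : realType) (P : probability T R) (c : R) (hc : 0 < c).
Local Notation Unif := (uniform_prob hc).
Variables (U V : T -> R) (G : set T) (e : R).
Hypotheses (mU : measurable_fun setT U) (mV : measurable_fun setT V) (mG : measurable G)
  (he : e = 1 \/ e = -1).
Hypothesis indep : forall A B, measurable A -> measurable B ->
  P (U @^-1` A `&` (V @^-1` B `&` G)) = (Unif A * P (V @^-1` B `&` G))%E.

Definition lawG (B : set R) : \bar R := P (V @^-1` B `&` G).
Let law0 : lawG set0 = 0%E. Proof. by rewrite /lawG preimage_set0 set0I measure0. Qed.
Let law_ge0 B : (0 <= lawG B)%E. Proof. exact: measure_ge0. Qed.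
Let law_sa : semi_sigma_additive lawG.
Proof.
move=> F mF tF mUF; rewrite /lawG preimage_bigcup setI_bigcupl.
apply: measure_semi_sigma_additive.
- by move=> n; apply: measurableI => //; exact: (mpre mV).
- apply/trivIsetP => i j _ _ ij.
  move/trivIsetP : tF => /(_ i j I I ij) tF.
  apply/seteqP; split => x // [[Fi _] [Fj _]].
  by have : (F i `&` F j) (V x) by [] ; rewrite tF.
- by apply: bigcupT_measurable => n; apply: measurableI => //; exact: (mpre mV).
Qed.
HB.instance Definition _ := isMeasure.Build _ _ _ lawG law0 law_ge0 law_sa.
Let law_fin : fin_num_fun lawG.
Proof.
move=> B mB; rewrite ge0_fin_numE ?measure_ge0 //.
rewrite /lawG (le_lt_trans (probability_le1 _ _)) ?ltry //.
by apply: measurableI => //; exact: (mpre mV).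
Qed.
HB.instance Definition _ := Measure_isFinite.Build _ _ _ lawG law_fin.

Let mVU : measurable_fun setT ((fun w => (V w, U w)) : T -> R * measurableTypeR R).
Proof. exact: measurable_fun_pair. Qed.

Definition jointG (S : set (R * measurableTypeR R)) : \bar R := P ((fun w => (V w, U w)) @^-1` S `&` G).
Let joint0 : jointG set0 = 0%E. Proof. by rewrite /jointG preimage_set0 set0I measure0. Qed.
Let joint_ge0 B : (0 <= jointG B)%E. Proof. exact: measure_ge0. Qed.
Let joint_sa : semi_sigma_additive jointG.
Proof.
move=> F mF tF mUF; rewrite /jointG preimage_bigcup setI_bigcupl.
apply: measure_semi_sigma_additive.
- by move=> n; apply: measurableI => //; exact: (mpre mVU).
- apply/trivIsetP => i j _ _ ij.
  move/trivIsetP : tF => /(_ i j I I ij) tF.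
  apply/seteqP; split => x // [[Fi _] [Fj _]].
  by have : (F i `&` F j) (V x, U x) by [] ; rewrite tF.
- by apply: bigcupT_measurable => n; apply: measurableI => //; exact: (mpre mVU).
Qed.
HB.instance Definition _ := isMeasure.Build _ _ _ jointG joint0 joint_ge0 joint_sa.

Lemma L1core A : measurable A ->
  P ((fun w => modr c (V w + e * U w)) @^-1` A `&` G) = (Unif A * P G)%E.
Proof.
move=> mA.
pose S := (fun p : R * measurableTypeR R => modr c (p.1 + e * p.2)) @^-1` A.
have mS : measurable S.
  apply: mpre => //; apply: measurableT_comp; first exact: measurable_modr.
  apply: measurable_funD => //; apply: measurable_funM => //.
have rect : forall A' B', measurable A' -> measurable B' ->
    jointG (A' `*` B') = (lawG A' * Unif B')%E.
  move=> A' B' mA' mB'; rewrite /jointG /lawG muleC -indep //.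
  rewrite (_ : _ `&` G = U @^-1` B' `&` (V @^-1` A' `&` G)) //.
  by apply/seteqP; split => x /=; [move=> [[h1 h2] h3]| move=> [h1 [h2 h3]]].
have Hpu := @product_measure_unique _ _ _ _ R lawG Unif jointG rect S mS.
transitivity (jointG S); first by [].
rewrite -Hpu /product_measure1 /=.
transitivity (\int[lawG]_x (cst (Unif A)) x)%E.
  apply: eq_integral => v _ /=; rewrite -(TI hc v he mA).
  by congr Unif; apply/seteqP; split => u; rewrite /xsection /= inE.
by rewrite integral_cst //= /lawG preimage_setT setTI.
Qed.

End L1.

Section Main.
Context d (T : measurableType d) (R : realType) (P : probability T R) (m : nat)
  (E : rel 'I_m) (a : R) (x : 'I_m -> R) (r : 'I_m -> 'I_m -> {RV P >-> R})
  (hma : 0 < m%:R * a).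
Hypothesis hind : forall B : 'I_m -> 'I_m -> set R, (forall i j, measurable (B i j)) ->
       P (\bigcap_(e in [set e : 'I_m * 'I_m | E e.1 e.2]) (r e.1 e.2 @^-1` B e.1 e.2))
       = (\prod_(e : 'I_m * 'I_m | E e.1 e.2) P (r e.1 e.2 @^-1` B e.1 e.2))%E.
Hypothesis hunif : forall i j, E i j -> forall A : set R, measurable A ->
       P (r i j @^-1` A) = uniform_prob hma A.
Local Notation c := (m%:R * a).
Local Notation Unif := (uniform_prob hma).

Definition Dom (e0 : 'I_m * 'I_m) := [set f : 'I_m * 'I_m | E f.1 f.2 /\ f != e0].

Definition Gen (e0 : 'I_m * 'I_m) : set (set T) :=
  [set X | exists B : 'I_m -> 'I_m -> set R, (forall i j, measurable (B i j)) /\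
     X = \bigcap_(f in Dom e0) (r f.1 f.2 @^-1` B f.1 f.2)].

Lemma mr i j B : measurable B -> measurable (r i j @^-1` B).
Proof. by move=> mB; apply: measurable_funPTI. Qed.

Lemma GenM e0 : Gen e0 `<=` measurable.
Proof.
move=> _ [B [mB ->]]; apply: fin_bigcap_measurable; first exact: finite_finset.
by move=> f _; apply: mr.
Qed.

Lemma GenI e0 : setI_closed (Gen e0).
Proof.
move=> _ _ [B1 [mB1 ->]] [B2 [mB2 ->]].
exists (fun i j => B1 i j `&` B2 i j); split; first by move=> i j; apply: measurableI.
apply/seteqP; split => w /=.
  by move=> [h1 h2] f Df; split; [apply: h1|apply: h2].
by move=> h; split => f Df; have [] := h f Df.
Qed.

Lemma GenT e0 : Gen e0 setT.
Proof.
exists (fun _ _ => setT); split => //.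
by apply/seteqP; split => w.
Qed.

Lemma GenR e0 f B : Dom e0 f -> measurable B -> Gen e0 (r f.1 f.2 @^-1` B).
Proof.
move=> Df mB.
exists (fun i j => if (i, j) == f then B else setT); split.
  by move=> i j; case: ifP.
apply/seteqP; split => w /=.
  by move=> h g Dg; case: ifP => // /eqP; rewrite -surjective_pairing => ->.
by move=> h; have := h f Df; rewrite -surjective_pairing eqxx.
Qed.

Lemma GenIndep e0 : E e0.1 e0.2 -> forall A X, measurable A -> Gen e0 X ->
  P (r e0.1 e0.2 @^-1` A `&` X) = (Unif A * P X)%E.
Proof.
move=> He0 A _ mA [B [mB ->]].
pose B1 := fun i j => if (i, j) == e0 then A else B i j.
pose B2 := fun i j => if (i, j) == e0 then setT else B i j.
have mB1 : forall i j, measurable (B1 i j) by move=> i j; rewrite /B1; case: ifP.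
have mB2 : forall i j, measurable (B2 i j) by move=> i j; rewrite /B2; case: ifP.
have h1 := hind mB1. have h2 := hind mB2.
have E1 : \bigcap_(e in [set e : 'I_m * 'I_m | E e.1 e.2]) (r e.1 e.2 @^-1` B1 e.1 e.2) =
    r e0.1 e0.2 @^-1` A `&` \bigcap_(f in Dom e0) (r f.1 f.2 @^-1` B f.1 f.2).
  apply/seteqP; split => w /=.
    move=> h; split.
      by have := h e0 He0; rewrite /B1 -surjective_pairing eqxx.
    by move=> f [Ef fe0]; have := h f Ef; rewrite /B1 -surjective_pairing (negbTE fe0).
  move=> [hA h] f Ef; rewrite /B1 -surjective_pairing; case: ifP => [/eqP ->//|fe0].
  by apply: h; split => //; rewrite fe0.
have E2 : \bigcap_(e in [set e : 'I_m * 'I_m | E e.1 e.2]) (r e.1 e.2 @^-1` B2 e.1 e.2) =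
    \bigcap_(f in Dom e0) (r f.1 f.2 @^-1` B f.1 f.2).
  apply/seteqP; split => w /=.
    by move=> h f [Ef fe0]; have := h f Ef; rewrite /B2 -surjective_pairing (negbTE fe0).
  move=> h f Ef; rewrite /B2 -surjective_pairing; case: ifP => [//|fe0].
  by apply: h; split => //; rewrite fe0.
rewrite -E1 h1 -E2 h2.
rewrite [LHS](bigD1 e0) //= [in RHS](bigD1 e0) //=.
rewrite /B1 /B2 -!surjective_pairing eqxx preimage_setT probability_setT mul1e hunif //.
congr (_ * _)%E; apply: eq_bigr => f /andP[_ fe0].
by rewrite -surjective_pairing (negbTE fe0).
Qed.


Definition Te (e0 : 'I_m * 'I_m) := g_sigma_algebraType (Gen e0).

Lemma TeT e0 : <<s Gen e0 >> `<=` measurable.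
Proof. apply: smallest_sub; [exact: sigma_algebra_measurable | exact: GenM]. Qed.

Lemma meas_T e0 (f : T -> R) :
  measurable_fun (setT : set (Te e0)) f -> measurable_fun (setT : set T) f.
Proof.
move=> mf _ B mB; rewrite setTI.
have := mf measurableT B mB; rewrite setTI => h.
exact: (TeT h).
Qed.

Lemma meas_r e0 f : Dom e0 f -> measurable_fun (setT : set (Te e0)) (r f.1 f.2).
Proof. by move=> Df _ B mB; rewrite setTI; apply: sub_sigma_algebra; exact: GenR. Qed.

Lemma msum_filter e0 (p : pred 'I_m) (h : 'I_m -> T -> R) :
  (forall j, p j -> measurable_fun (setT : set (Te e0)) (h j)) ->
  measurable_fun (setT : set (Te e0)) (fun w => \sum_(j | p j) h j w).
Proof.
move=> mh.
rewrite (_ : (fun w => \sum_(j | p j) h j w) = (fun w => \sum_(j <- index_enum 'I_m) (if p j then h j w else 0))).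
  apply: measurable_sum => j; case pj : (p j); [exact: mh | exact: measurable_cst].
by apply/funext => w; rewrite big_mkcond.
Qed.

Definition xt (i : 'I_m) (w : T) := xpert E a x (fun u v => r u v w) i.

Lemma meas_xt e0 i : (forall j, (j, i) != e0) -> (forall j, (i, j) != e0) ->
  measurable_fun (setT : set (Te e0)) (xt i).
Proof.
move=> h1 h2; rewrite /xt /xpert /tmask.
apply: measurableT_comp; first exact: (measurable_modr hma).
apply: measurable_funD => //.
apply: measurableT_comp; first exact: (measurable_modr hma).
apply: measurable_funB.
  apply: (@msum_filter e0 (fun j => E j i) (fun j => (r j i : T -> R))) => j Ej.
  by apply: (meas_r (f := (j, i))); split => //=.
apply: (@msum_filter e0 (fun j => E i j) (fun j => (r i j : T -> R))) => j Ej.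
by apply: (meas_r (f := (i, j))); split => //=.
Qed.

Lemma step (B : 'I_m -> set R) (mB : forall i, measurable (B i)) (S : {set 'I_m})
    (u : 'I_m) (e0 : 'I_m * 'I_m) (eps : R) (V : T -> R) :
  u \in S -> E e0.1 e0.2 -> (eps = 1 \/ eps = -1) ->
  (forall i, i \in S -> i != u -> measurable_fun (setT : set (Te e0)) (xt i)) ->
  measurable_fun (setT : set (Te e0)) V ->
  (forall w, xt u w = modr c (V w + eps * r e0.1 e0.2 w)) ->
  P (\bigcap_(i in [set i | i \in S :\ u]) (xt i @^-1` B i)) = (\prod_(i in S :\ u) Unif (B i))%E ->
  P (\bigcap_(i in [set i | i \in S]) (xt i @^-1` B i)) = (\prod_(i in S) Unif (B i))%E.
Proof.
move=> uS He0 heps mS mV hxu IH.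
set G := \bigcap_(i in [set i | i \in S :\ u]) (xt i @^-1` B i).
have GTe : <<s Gen e0 >> G.
  apply: (@fin_bigcap_measurable _ (Te e0)); first exact: finite_finset.
  move=> i /=; rewrite !inE => /andP[iu iS]; apply: (mpre (mS i iS iu)); exact: mB.
have -> : \bigcap_(i in [set i | i \in S]) (xt i @^-1` B i) =
    (fun w => modr c (V w + eps * r e0.1 e0.2 w)) @^-1` B u `&` G.
  apply/seteqP; split => w /=.
    move=> h; split; first by rewrite -hxu; apply: h.
    by move=> i; rewrite /= !inE => /andP[_ iS]; apply: h.
  move=> [hu hG] i /= iS; have [->|iu] := eqVneq i u; first by rewrite /= hxu.
  by apply: hG; rewrite /= !inE iu iS.
rewrite (@L1core _ _ _ P _ hma (r e0.1 e0.2) V G eps) //.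
- rewrite IH [RHS](bigD1 u) //=; congr (_ * _)%E; apply: eq_bigl => i; rewrite !inE andbC //.
- by apply: (meas_T (e0 := e0)).
- exact: (TeT GTe).
- move=> A B' mA mB'; apply: (stepI (Gen := Gen e0)) => //.
  + exact: GenM.
  + exact: GenI.
  + exact: GenT.
  + by move=> A' X mA' GX; apply: GenIndep.
  + apply: (@measurableI _ (Te e0)) => //; exact: (mpre mV).
Qed.


Lemma cross (Tf : finType) (e : rel Tf) (S : pred Tf) x0 y0 :
  connect e x0 y0 -> S x0 -> ~~ S y0 -> exists u v, [/\ S u, ~~ S v & e u v].
Proof.
move/connectP => [p pth ->] {y0}.
elim: p x0 pth => [|z p IH] x0 /=; first by move=> _ ->.
move=> /andP[ez pth] Sx nS.
case Sz: (S z); first by apply: (IH z pth).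

by exists x0, z; rewrite Sz.
Qed.

Lemma main_ind (hconn : ugraph_connected E) (k : 'I_m) (B : 'I_m -> set R)
    (mB : forall i, measurable (B i)) n :
  forall S : {set 'I_m}, #|S| = n -> k \notin S ->
  P (\bigcap_(i in [set i | i \in S]) (xt i @^-1` B i)) = (\prod_(i in S) Unif (B i))%E.
Proof.
elim: n => [|n IH] S hS kS.
  have -> : S = finset.set0 by apply/cards0_eq.
  rewrite big_set0.
  have -> : [set i | i \in (finset.set0 : {set 'I_m})] = set0.
    by apply/seteqP; split => i //=; rewrite inE.
  by rewrite bigcap_set0 probability_setT.
have [u0 u0S] : exists u0, u0 \in S.
  by apply/set0Pn; rewrite -card_gt0 hS.
have [u [v [uS vS euv]]] := @cross _ (undirected E) (mem S) u0 k (hconn u0 k) u0S kS.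
have {uS} uS : u \in S := uS.
have {vS} vS : v \notin S := vS.
have uv : u != v by apply: contraNneq vS => <-.
have IH' := IH (S :\ u).
have hS' : #|S :\ u| = n by have := cardsD1 u S; rewrite uS hS add1n => -[].
have kS' : k \notin S :\ u by rewrite inE (negbTE kS) andbF.
have Hi : forall i, i \in S -> i != u -> (i != v).
  by move=> i iS _; apply: contraNneq vS => <-.
case/orP: euv => [Euv|Evu].
- pose V := fun w => x u + ((\sum_(j | E j u) r j u w) - (\sum_(j | E u j && (j != v)) r u j w)).
  apply: (@step B mB S u (u, v) (-1) V) => //.
  + by right.
  + move=> i iS iu; apply: meas_xt => j; rewrite xpair_eqE.
      by rewrite (negbTE (Hi i iS iu)) andbF.
    by rewrite (negbTE iu).
  + apply: measurable_funD => //; apply: measurable_funB.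
      apply: (@msum_filter (u, v) (fun j => E j u) (fun j => (r j u : T -> R))) => j Ej.
      by apply: (meas_r (f := (j, u))); split => //=; rewrite xpair_eqE (negbTE uv) andbF.
    apply: (@msum_filter (u, v) (fun j => E u j && (j != v)) (fun j => (r u j : T -> R))) => j /andP[Ej jv].
    by apply: (meas_r (f := (u, j))); split => //=; rewrite xpair_eqE (negbTE jv) andbF.
  + move=> w; rewrite /xt /xpert /tmask (modr_mod hma) /V /=.
    rewrite [X in _ - X](bigD1 v) //=.
    congr modr; lra.
  + exact: IH' hS' kS'.
- pose V2 := fun w => x u + ((\sum_(j | E j u && (j != v)) r j u w) - (\sum_(j | E u j) r u j w)).
  apply: (@step B mB S u (v, u) 1 V2) => //.
  + by left.
  + move=> i iS iu; apply: meas_xt => j; rewrite xpair_eqE.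
      by rewrite (negbTE iu) andbF.
    by rewrite (negbTE (Hi i iS iu)).
  + apply: measurable_funD => //; apply: measurable_funB.
      apply: (@msum_filter (v, u) (fun j => E j u && (j != v)) (fun j => (r j u : T -> R))) => j /andP[Ej jv].
      by apply: (meas_r (f := (j, u))); split => //=; rewrite xpair_eqE (negbTE jv).
    apply: (@msum_filter (v, u) (fun j => E u j) (fun j => (r u j : T -> R))) => j Ej.
    by apply: (meas_r (f := (u, j))); split => //=; rewrite xpair_eqE (negbTE uv).
  + move=> w; rewrite /xt /xpert /tmask (modr_mod hma) /V2 /=.
    rewrite [X in X - _](bigD1 v) //=.
    congr modr; lra.
  + exact: IH' hS' kS'.
Qed.

End Main.

Lemma modr_sum (R : realType) (c : R) (hc : 0 < c) (I : Type) (s : seq I) (f : I -> R) :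
  modr c (\sum_(i <- s) modr c (f i)) = modr c (\sum_(i <- s) f i).
Proof.
elim: s => [|i s IH]; first by rewrite !big_nil.
have e1 : forall p q, modr c (modr c p + q) = modr c (p + q).
  by move=> p q; rewrite addrC (modr_mod hc) addrC.
by rewrite !big_cons e1 -(modr_mod hc (f i) (\sum_(j <- s) modr c (f j))) IH (modr_mod hc).
Qed.

Unset Implicit Arguments.

Theorem lemma2 (d : measure_display) (T : measurableType d) (R : realType)
    (P : probability T R) (m : nat) (E : rel 'I_m) (a : R)
    (x : 'I_m -> R) (r : 'I_m -> 'I_m -> {RV P >-> R})
    (hm : (0 < m)%N) (ha : 0 < a) (hma : 0 < m%:R * a)
    (hx : forall i, 0 <= x i < a)
    (* the r_ij, (i,j) in E, are mutually independent *)
    (hind : forall B : 'I_m -> 'I_m -> set R, (forall i j, measurable (B i j)) ->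
       P (\bigcap_(e in [set e : 'I_m * 'I_m | E e.1 e.2]) (r e.1 e.2 @^-1` B e.1 e.2))
       = (\prod_(e : 'I_m * 'I_m | E e.1 e.2) P (r e.1 e.2 @^-1` B e.1 e.2))%E)
    (* each r_ij, (i,j) in E, is uniform on [0, m a) *)
    (hunif : forall i j, E i j -> forall A : set R, measurable A ->
       P (r i j @^-1` A) = uniform_prob hma A)
    (hconn : ugraph_connected E) :
  let xt : 'I_m -> T -> R := fun i w => xpert E a x (fun u v => r u v w) i in
  (* the constraint mod(sum_i x~_i, m a) = sum_i x_i holds almost surely *)
  P [set w | modr (m%:R * a) (\sum_i xt i w) = \sum_i x i] = 1%E /\
  (* and, dropping any one coordinate k, the remaining m-1 perturbed inputs are
     i.i.d. uniform on [0, m a): i.e. (x~_i) is uniform on [0,ma)^m subject to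
     the constraint *)
  (forall (k : 'I_m) (B : 'I_m -> set R), (forall i, measurable (B i)) ->
     P (\bigcap_(i in [set i | i != k]) (xt i @^-1` B i))
     = (\prod_(i | i != k) uniform_prob hma (B i))%E).
Proof.
move=> xt0; split.
- have -> : [set w | modr (m%:R * a) (\sum_i xt0 i w) = \sum_i x i] = setT.
    apply/seteqP; split => w // _ /=.
    rewrite /xt0 /xpert (modr_sum hma) big_split /= -(modr_mod hma) /tmask (modr_sum hma).
    have -> : \sum_i ((\sum_(j | E j i) r j i w) - \sum_(j | E i j) r i j w) = 0.
      rewrite sumrB (exchange_big_dep xpredT) //=; apply/eqP; rewrite subr_eq0; apply/eqP.
      by [].
    have -> : modr (m%:R * a) 0 = 0 by rewrite (modr_small hma) // lexx hma.
    rewrite addr0 (modr_small hma) //.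
    apply/andP; split; first by apply: sumr_ge0 => i _; case/andP: (hx i).
    have -> : m%:R * a = \sum_(i < m) a by rewrite sumr_const card_ord mulr_natl.
    apply: ltr_sum; last by move=> i _; case/andP: (hx i).
    by apply/hasP; exists (Ordinal hm); [rewrite mem_index_enum|].
  exact: probability_setT.
- move=> k B mB.
  have := @main_ind d T R P m E a x r hma hind hunif hconn k B mB _ [set i | i != k]%SET erefl.
  rewrite inE eqxx => /(_ isT) H.
  have E1 : [set i | i != k] = [set` [set i | i != k]%SET] :> set 'I_m.
    by apply/seteqP; split => i /=; rewrite inE.
  rewrite E1; rewrite H; apply: eq_bigl => i; rewrite inE.
  by [].
Qed.
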